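(* Let $K=2^m$ with $m\in\mathbb{N}$, let $\gamma,\delta>0$, and let $a\in\mathbb{R}^{K-1}$ have $a_i=\gamma$ for odd $i$ and $a_i=\delta$ for even $i$ ($i=1,\dots,K-1$), so $\gamma$ appears $K/2$ times and $\delta$ appears $K/2-1$ times. Then $$\big(\Psi e^{-\Psi a}\big)_i=\begin{cases}2e^{-K\gamma}+(K-2)e^{-\frac K2(\gamma+\delta)}, & i\text{ odd},\\ Ke^{-\frac K2(\gamma+\delta)}, & i\text{ even},\end{cases}$$ where the exponential $e^{-\Psi a}$ is taken entrywise.
   Context: Sylvester Hadamard matrices: $\Phi_1=(1)$, $\Phi_{2^m}=\begin{bmatrix}\Phi_{2^{m-1}}&\Phi_{2^{m-1}}\\ \Phi_{2^{m-1}}&-\Phi_{2^{m-1}}\end{bmatrix}$, $\Phi=\Phi_K$. $\Psi\in\mathbb{R}^{(K-1)\times(K-1)}$ is obtained from $1_K1_K^T-\Phi$ by deleting its first row and first column, with rows/columns of $\Psi$ indexed $1,\dots,K-1$. *)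

(* Defs.v *)
From mathcomp Require Import all_boot all_order all_algebra.
From mathcomp Require Import reals sequences exp.
Set Implicit Arguments. Unset Strict Implicit. Unset Printing Implicit Defensive.
Import Order.TTheory GRing.Theory Num.Theory.
Local Open Scope ring_scope.

(* Entry (i,j) (0-based) of the Sylvester Hadamard matrix Phi_{2^m},
   following the block recursion
   Phi_{2^(m+1)} = [[Phi_{2^m}, Phi_{2^m}], [Phi_{2^m}, -Phi_{2^m}]]. *)
Fixpoint sylv (m i j : nat) : int :=
  match m with
  | 0 => 1
  | m'.+1 =>
    let h := (2 ^ m')%N in
    if (i < h)%N then
      (if (j < h)%N then sylv m' i j else sylv m' i (j - h))
    else
      (if (j < h)%N then sylv m' (i - h) j else - sylv m' (i - h) (j - h))
  end.

Definition Phi (R : nzRingType) (m : nat) : 'M[R]_(2 ^ m) :=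
  \matrix_(i, j) (sylv m i j)%:~R.

(* Psi: 1_K 1_K^T - Phi with first row and column deleted; the 0-based
   index k of Psi corresponds to row/column k+1 of Phi (i.e. the paper's
   index k+1 in 1..K-1). *)
Definition Psi (R : nzRingType) (m : nat) : 'M[R]_(2 ^ m - 1) :=
  \matrix_(i, j) (1 - (sylv m i.+1 j.+1)%:~R).

(* The vector a: paper index i = k+1; a_i = gamma if i odd, delta if even *)
Definition avec (R : nzRingType) (m : nat) (gamma delta : R) : 'cV[R]_(2 ^ m - 1) :=
  \col_k (if odd k.+1 then gamma else delta).

(* Main.v *)
Require Import Defs.
From mathcomp Require Import all_boot all_order all_algebra.
From mathcomp Require Import reals sequences exp.
From mathcomp Require Import ring lra zify.
Import Order.TTheory GRing.Theory Num.Theory.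
Local Open Scope ring_scope.

Lemma sylvS m i j : sylv m.+1 i j =
  if (i < 2 ^ m)%N then (if (j < 2 ^ m)%N then sylv m i j else sylv m i (j - 2 ^ m))
  else (if (j < 2 ^ m)%N then sylv m (i - 2 ^ m) j else - sylv m (i - 2 ^ m) (j - 2 ^ m)).
Proof. by []. Qed.

Lemma sylv_i0 m i : sylv m i 0 = 1.
Proof.
elim: m i => [//|m IH] i; rewrite sylvS expn_gt0 /=; by case: ifP.
Qed.

Lemma sylv_0j m j : sylv m 0 j = 1.
Proof.
elim: m j => [//|m IH] j; rewrite sylvS expn_gt0 /=; by case: ifP.
Qed.

Lemma sylv_sym m i j : sylv m i j = sylv m j i.
Proof.
elim: m i j => [//|m IH] i j; rewrite !sylvS.
by case: (ltnP i (2 ^ m)); case: (ltnP j (2 ^ m)); rewrite IH.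
Qed.

Lemma sylv_1j m j : (1 < 2 ^ m)%N -> (j < 2 ^ m)%N ->
  sylv m 1 j = if odd j then -1 else 1.
Proof.
elim: m j => [//|m IH] j h1 hj; rewrite sylvS.
case: m IH h1 hj => [|m] IH h1 hj.
  by case: j hj => [|[|]].
have h2 : (1 < 2 ^ m.+1)%N by rewrite expnS; have := expn_gt0 2 m; lia.
rewrite h2; case: ifP => hjh; first by rewrite IH.
rewrite IH //; last by rewrite expnS in hj; lia.
rewrite oddB; last by lia.
by rewrite expnS oddM /= addbF.
Qed.

Lemma split_sum (R : nzRingType) (F : nat -> R) h :
  \sum_(0 <= j < h + h) F j = \sum_(0 <= j < h) F j + \sum_(0 <= j < h) F (j + h).
Proof.
rewrite (big_cat_nat _ (n := h)) ?leq_addr //.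
by rewrite -{2}(add0n h) big_addn addnK.
Qed.

Lemma orth (R : nzRingType) m i k : (i < 2 ^ m)%N -> (k < 2 ^ m)%N ->
  \sum_(0 <= j < 2 ^ m) ((sylv m i j)%:~R * (sylv m k j)%:~R : R) =
  if i == k then (2 ^ m)%:R else 0.
Proof.
elim: m i k => [|m IH] i k hi hk.
  by case: i hi => // _; case: k hk => // _; rewrite big_nat1 /= mulr1.
set h := (2 ^ m)%N.
have eh : (2 ^ m.+1 = h + h)%N by rewrite expnS /h; lia.
rewrite eh split_sum.
have e1 : forall F G : nat -> R, (forall j, (j < h)%N -> F j = G j) ->
   \sum_(0 <= j < h) F j = \sum_(0 <= j < h) G j.
  by move=> F G FG; apply: eq_big_nat => j /andP[_ ?]; apply: FG.
rewrite eh in hi hk.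
have ex : forall j, (j + h < h)%N = false by move=> j; lia.
have ey : forall j, (j + h - h)%N = j by move=> j; lia.
under eq_big_nat => j /andP[_ hj].
  rewrite !sylvS -/h hj. over.
under [X in _ + X]eq_bigr => j _ do rewrite !sylvS -/h ex ey.
case: (ltnP i h) => hih; case: (ltnP k h) => hkh.
- rewrite IH // natrD; by case: (i == k); rewrite ?addr0.
- under [X in _ + X]eq_bigr => j _ do rewrite intrN mulrN.
  rewrite sumrN IH ?subrr //; last lia.
  by have -> : (i == k) = false by apply/negbTE; lia.
- under [X in _ + X]eq_bigr => j _ do rewrite intrN mulNr.
  rewrite sumrN IH ?subrr //; last lia.
  by have -> : (i == k) = false by apply/negbTE; lia.
- under [X in _ + X]eq_bigr => j _ do rewrite !intrN mulrNN.
  rewrite IH; try lia.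
  have -> : (i - h == k - h)%N = (i == k) by apply/eqP/eqP; lia.
  by rewrite natrD; case: (i == k); rewrite ?addr0.
Qed.
Lemma sum_shift (R : nzRingType) (F : nat -> R) n :
  \sum_(k < n) F k.+1 = \sum_(0 <= j < n.+1) F j - F 0%N.
Proof. by rewrite big_nat_recl // big_mkord addrC addKr. Qed.

Lemma sum4 (R : nzRingType) (F1 F2 F3 F4 : nat -> R) a1 a2 a3 a4 N :
  \sum_(0 <= j < N) (a1 * F1 j - a2 * F2 j - a3 * F3 j + a4 * F4 j) =
  a1 * \sum_(0 <= j < N) F1 j - a2 * \sum_(0 <= j < N) F2 j
  - a3 * \sum_(0 <= j < N) F3 j + a4 * \sum_(0 <= j < N) F4 j.
Proof. by rewrite !big_split /= !sumrN -!mulr_sumr. Qed.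

Lemma intrm1 (R : nzRingType) : ((-1 : int)%:~R : R) = -1.
Proof. by rewrite intrN. Qed.

Theorem lemmaD8 (R : realType) (m : nat) (gamma delta : R)
  (hg : 0 < gamma) (hd : 0 < delta) (i : 'I_(2 ^ m - 1)) :
  let K : R := (2 ^ m)%N%:R in
  (Psi R m *m map_mx (fun x => expR (- x)) (Psi R m *m avec m gamma delta)) i 0 =
  (if odd i.+1
   then 2 * expR (- (K * gamma)) + (K - 2) * expR (- (K / 2 * (gamma + delta)))
   else K * expR (- (K / 2 * (gamma + delta)))).
Proof.
case: m i => [|m] i; first by case: i.
move=> K.
have hN1 : (1 < 2 ^ m.+1)%N by rewrite expnS; have := expn_gt0 2 m; lia.
have eN : ((2 ^ m.+1 - 1).+1 = 2 ^ m.+1)%N by lia.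
set s := fun x j => ((sylv m.+1 x j)%:~R : R).
have s0 : forall j, s 0%N j = 1 by move=> j; rewrite /s sylv_0j.
have ss : forall x, (x < 2 ^ m.+1)%N -> \sum_(0 <= j < 2 ^ m.+1) s x j * s 0%N j = if x == 0%N then K else 0.
  by move=> x hx; rewrite /s orth ?expn_gt0.
have s1 : forall j, (j < 2 ^ m.+1)%N -> s 1%N j = if odd j then -1 else 1.
  by move=> j hj; rewrite /s sylv_1j //; case: odd; rewrite ?intrm1.
have c2 : (2 : R) != 0 by rewrite pnatr_eq0.
have hb : forall k : 'I_(2 ^ m.+1 - 1),
  (Psi R m.+1 *m avec m.+1 gamma delta) k 0 =
  if k.+1 == 1%N then K * gamma else K / 2 * (gamma + delta).
  move=> k; rewrite mxE.
  under eq_bigr => j _ do rewrite !mxE.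
  pose F j := (1 - s k.+1 j) * (if odd j then gamma else delta).
  rewrite (_ : \sum_(j < _) _ = \sum_(j < 2 ^ m.+1 - 1) F j.+1) //.
  rewrite sum_shift eN /F /s sylv_i0 -/s subrr mul0r subr0.
  have hk : (k.+1 < 2 ^ m.+1)%N by have := ltn_ord k; lia.
  under eq_big_nat => j /andP[_ hj].
    rewrite (_ : _ * _ = (gamma + delta) / 2 * (s 0%N j * s 0%N j)
       - (gamma - delta) / 2 * (s 1%N j * s 0%N j)
       - (gamma + delta) / 2 * (s k.+1 j * s 0%N j)
       + (gamma - delta) / 2 * (s k.+1 j * s 1%N j)); last first.
      by rewrite !s0 s1 //; case: odd; field.
    over.
  rewrite sum4 !ss ?expn_gt0 // /s orth //= -/K.
  by case: (k.+1 == 1)%N; field.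
rewrite mxE.
under eq_bigr => k _ do rewrite mxE mxE hb.
set E1 := expR (- (K * gamma)).
set E2 := expR (- (K / 2 * (gamma + delta))).
pose G j := (1 - s i.+1 j) * (if j == 1%N then E1 else E2).
rewrite (_ : \sum_(j < _) _ = \sum_(j < 2 ^ m.+1 - 1) G j.+1); last first.
  by apply: eq_bigr => k _; rewrite /G; case: ifP.
rewrite sum_shift eN /G /s sylv_i0 -/s subrr mul0r subr0.
have hi : (i.+1 < 2 ^ m.+1)%N by have := ltn_ord i; lia.
under eq_big_nat => j /andP[_ hj].
  rewrite (_ : _ * _ = E2 * (s 0%N j * s 0%N j) - E2 * (s i.+1 j * s 0%N j)
     - 0 * (s 0%N j) + (E1 - E2) * ((1 - s i.+1 j) * (j == 1%N)%:R)); last first.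
    by rewrite !s0; case: (j == 1%N); rewrite /=; ring.
  over.
rewrite sum4 !ss ?expn_gt0 //= mul0r subr0.
rewrite big_ltn ?expn_gt0 // big_ltn // big_nat big1; last first.
  by move=> j /andP[hj _]; rewrite eq_sym (ltn_eqF hj) mulr0.
rewrite /s sylv_i0 (sylv_sym _ i.+1 1) sylv_1j //.
rewrite /=; case: (odd i); rewrite /= ?intrm1 ?intr1 ?mulr0 ?mulr1 ?addr0 ?add0r ?subrr /=; ring.
Qed.
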